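(* Let $\mathcal G=(\mathcal V,\mathcal E,W)$ be a network, $h\in\mathbb{R}^{\mathcal V}$, and consider the SNC game with binary actions on $\mathcal G$ with external field $h$, with set of Nash equilibria $\mathcal N$. Let $\mathcal V=\mathcal R\cup\mathcal S$, $\mathcal R\cap\mathcal S=\emptyset$, be a binary partition such that $\mathcal G_{\mathcal R}$ is unsigned. Assume there exists $a\in\{\pm1\}$ such that $$w_i^{\mathcal R}+ah_i\ge w_i^{\mathcal S}\qquad\forall i\in\mathcal R,$$ and $\mathcal N_{\mathcal S}^{(a\mathbf 1)}\neq\emptyset$. Then there exists a Nash equilibrium $x^*\in\mathcal N$ with $x^*_{\mathcal R}=a\mathbf 1$.
   Context: A network is a triple $\mathcal G=(\mathcal V,\mathcal E,W)$ where $\mathcal V$ is a finite nonempty set, $\mathcal E\subseteq\mathcal V\times\mathcal V$, and $W\in\mathbb{R}^{\mathcal V\times\mathcal V}$ has zero diagonal and satisfies $W_{ij}\neq0$ iff $(i,j)\in\mathcal E$ (weights may have either sign). It is unsigned if $W\ge0$ entrywise. For $\mathcal U\subseteq\mathcal V$, the subnetwork $\mathcal G_{\mathcal U}$ has node set $\mathcal U$, links $\mathcal E\cap(\mathcal U\times\mathcal U)$ and weight matrix $W_{\mathcal U\mathcal U}$. For $i\in\mathcal V$ and $\mathcal B\subseteq\mathcal V$, $w_i^{\mathcal B}=\sum_{j\in\mathcal B}|W_{ij}|$. $\mathbf 1$ is the all-ones vector. The SNC game with binary actions on $\mathcal G$ with external field $h\in\mathbb{R}^{\mathcal V}$ has player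 set $\mathcal V$, action set $\{-1,+1\}$ for each player, strategy profiles $\mathcal X=\{\pm1\}^{\mathcal V}$, and utilities $u_i(x)=h_ix_i+x_i\sum_{j\in\mathcal V}W_{ij}x_j$. Best responses $\mathcal B_i(x_{-i})=\arg\max_{x_i\in\{\pm1\}}u_i(x_i,x_{-i})$; Nash equilibrium: $x^*_i\in\mathcal B_i(x^*_{-i})$ for all $i$. Profiles are written $x=(x_{\mathcal R},x_{\mathcal S})$. For $y\in\{\pm1\}^{\mathcal R}$, the $\mathcal S$-restricted game with strategy profile of players in $\mathcal R$ frozen to $y$ has player set $\mathcal S$, actions $\{\pm1\}$, and utilities $u_i^{(y)}(z)=u_i(y,z)$ for $i\in\mathcal S$, $z\in\{\pm1\}^{\mathcal S}$; $\mathcal N_{\mathcal S}^{(y)}$ is its set of Nash equilibria. *)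

(* Defs.v *)
From mathcomp Require Import all_boot all_order all_algebra.
Set Implicit Arguments. Unset Strict Implicit. Unset Printing Implicit Defensive.
Import Order.TTheory GRing.Theory Num.Theory.
Local Open Scope ring_scope.

(* A network on a finite nonempty node set V: weight matrix W with zero
   diagonal; the link set is E = {(i,j) | W i j != 0}, so it is determined by W. *)
Definition network (R : numDomainType) (V : finType) (W : V -> V -> R) : Prop :=
  (0 < #|V|)%N /\ forall i, W i i = 0.

Definition link_set (R : numDomainType) (V : finType) (W : V -> V -> R) : {set V * V} :=
  [set e | W e.1 e.2 != 0].

Definition unsigned_on (R : numDomainType) (V : finType) (W : V -> V -> R) (U : {set V}) : Prop :=
  forall i j, i \in U -> j \in U -> 0 <= W i j.

Definition wB (R : numDomainType) (V : finType) (W : V -> V -> R) (i : V) (B : {set V}) : R :=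
  \sum_(j in B) `|W i j|.

Definition pm1 (R : numDomainType) (b : R) : Prop := b = 1 \/ b = -1.
Definition profile (R : numDomainType) (V : finType) (x : V -> R) : Prop :=
  forall i, pm1 (x i).

Definition upd (R : numDomainType) (V : finType) (x : V -> R) (i : V) (b : R) : V -> R :=
  fun j => if j == i then b else x j.

Definition util (R : numDomainType) (V : finType) (W : V -> V -> R) (h : V -> R)
    (i : V) (x : V -> R) : R :=
  h i * x i + x i * \sum_(j : V) W i j * x j.

Definition best_resp (R : numDomainType) (V : finType) (W : V -> V -> R) (h : V -> R)
    (i : V) (x : V -> R) : Prop :=
  forall b, pm1 b -> util W h i (upd x i b) <= util W h i x.

Definition nash (R : numDomainType) (V : finType) (W : V -> V -> R) (h : V -> R)
    (x : V -> R) : Prop :=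
  profile x /\ forall i, best_resp W h i x.

Definition join_prof (R : numDomainType) (V : finType) (Rs : {set V}) (y z : V -> R) : V -> R :=
  fun j => if j \in Rs then y j else z j.

(* z (only its values on S = ~: Rs matter) is a Nash equilibrium of the
   S-restricted game with players in Rs frozen to y : members of N_S^(y). *)
Definition restricted_nash (R : numDomainType) (V : finType) (W : V -> V -> R) (h : V -> R)
    (Rs : {set V}) (y z : V -> R) : Prop :=
  (forall i, i \in ~: Rs -> pm1 (z i)) /\
  forall i, i \in ~: Rs -> best_resp W h i (join_prof Rs y z).

(* Main.v *)
Require Import Defs.
From mathcomp Require Import all_boot all_order all_algebra.
From mathcomp Require Import lra.
Import Order.TTheory GRing.Theory Num.Theory.
Local Open Scope ring_scope.

Lemma sum_upd (R : realFieldType) (V : finType) (W : V -> V -> R) (x : V -> R) i b :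
  W i i = 0 -> \sum_j W i j * upd x i b j = \sum_j W i j * x j.
Proof.
move=> Wii; apply: eq_bigr => j _; rewrite /upd.
by case: eqP => [->|//]; rewrite Wii !mul0r.
Qed.

Lemma Nnorm_le (R : realFieldType) (w : R) : - `|w| <= w.
Proof. by have := ler_norm (- w); rewrite normrN lerNl. Qed.

Theorem proposition4 (R : realFieldType) (V : finType) (W : V -> V -> R) (h : V -> R)
    (Rs : {set V}) (a : R) :
  network W ->
  unsigned_on W Rs ->
  pm1 a ->
  (forall i, i \in Rs -> wB W i (~: Rs) <= wB W i Rs + a * h i) ->
  (exists z : V -> R, restricted_nash W h Rs (fun _ => a) z) ->
  exists x : V -> R, nash W h x /\ (forall i, i \in Rs -> x i = a).
Proof.
move=> [_ Wd] Wpos Ha Hw [z [zpm zbr]].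
set x := join_prof Rs (fun _ => a) z.
have xR : forall i, i \in Rs -> x i = a by move=> i iR; rewrite /x /join_prof iR.
exists x; split => //; split.
  move=> i; rewrite /x /join_prof; case: ifP => // iR.
  by apply: zpm; rewrite in_setC iR.
move=> i; case iR: (i \in Rs); last by apply: zbr; rewrite in_setC iR.
move=> b Hb.
have aa : a * a = 1 by case: Ha => ->; rewrite ?mulr1 ?mulrNN ?mulr1.
set S := \sum_j W i j * x j.
have key : wB W i Rs - wB W i (~: Rs) <= a * S.
  rewrite /S mulr_sumr /wB.
  rewrite [X in _ <= X](bigID (fun j => j \in Rs)) /=.
  apply: lerD.
    apply: ler_sum => j jR; rewrite xR // mulrCA aa mulr1.
    by rewrite ger0_norm //; apply: Wpos.
  rewrite -sumrN; rewrite [X in X <= _](eq_bigl (fun j => j \notin Rs)); last by move=> j; rewrite in_setC.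
  apply: ler_sum => j jR.
  have : x j = z j by rewrite /x /join_prof (negbTE jR).
  move=> ->; have := zpm j; rewrite in_setC => /(_ jR).
  case=> ->; case: Ha => ->; rewrite ?mulr1 ?mulrN1 ?mulN1r ?mul1r ?opprK ?mulrN ?mulr1;
    rewrite ?lerN2 ?Nnorm_le ?ler_norm //; rewrite mul1r ?Nnorm_le ?ler_norm.
have Hi := Hw i iR.
rewrite /util (@sum_upd _ _ _ _ _ _ (Wd i)) -/S /upd eqxx xR //.
case: Hb => ->; case: Ha => Ea; rewrite Ea in key Hi aa *; lra.
Qed.
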